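(* Let $\sigma^{11},\sigma^{22}$ be sufficiently smooth functions on $\overline\Omega$ (say in $W^{3,\infty}(\Omega)$) and define, for $0\le i\le n_x-1$, $0\le j\le n_y-1$, $$\tilde\sigma^{kk}_{i+1/2,j+1/2}=\sigma^{kk}_{i+1/2,j+1/2}-\frac{h_{i+1/2}^2}{8}\Big(\frac{\partial^2\sigma^{kk}}{\partial x^2}\Big)_{i+1/2,j+1/2}-\frac{l_{j+1/2}^2}{8}\Big(\frac{\partial^2\sigma^{kk}}{\partial y^2}\Big)_{i+1/2,j+1/2},\quad k=1,2.$$ Then $$\Big(\frac{\partial\sigma^{11}}{\partial x}\Big)_{i,j+1/2}=[D_x\tilde\sigma^{11}]_{i,j+1/2}+\epsilon^x_{i,j+1/2}(\sigma^{11}),\quad 1\le i\le n_x-1,\ 0\le j\le n_y-1,$$ $$\Big(\frac{\partial\sigma^{22}}{\partial y}\Big)_{i+1/2,j}=[D_y\tilde\sigma^{22}]_{i+1/2,j}+\epsilon^y_{i+1/2,j}(\sigma^{22}),\quad 0\le i\le n_x-1,\ 1\le j\le n_y-1,$$ where $|\epsilon^x_{i,j+1/2}(\sigma^{11})|\le C(h^2+l^2)\|\sigma^{11}\|_{3,\infty}$ and $|\epsilon^y_{i+1/2,j}(\sigma^{22})|\le C(h^2+l^2)\|\sigma^{22}\|_{3,\infty}$ with $C$ an absolute constant independent of the grid.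
   Context: Grid on $\Omega=(0,a)\times(0,b)$: $0=x_0<\dots<x_{n_x}=a$, $0=y_0<\dots<y_{n_y}=b$, $x_{i+1/2}=(x_i+x_{i+1})/2$, $h_{i+1/2}=x_{i+1}-x_i$, $h_i=(h_{i-1/2}+h_{i+1/2})/2$, $h=\max_i h_{i+1/2}$; analogously $y_{j+1/2}$, $l_{j+1/2}=y_{j+1}-y_j$, $l_j=(l_{j-1/2}+l_{j+1/2})/2$, $l=\max_j l_{j+1/2}$. For a function $\phi$, $\phi_{\alpha,\beta}=\phi(x_\alpha,y_\beta)$. $[D_x\phi]_{i,m}=(\phi_{i+1/2,m}-\phi_{i-1/2,m})/h_i$, $[D_y\phi]_{k,j}=(\phi_{k,j+1/2}-\phi_{k,j-1/2})/l_j$ for interior indices. $\|\cdot\|_{3,\infty}$ denotes the $W^{3,\infty}(\Omega)$ norm (maximum of sup norms of all partial derivatives of order at most 3). *)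

(* Defs.v *)
From Stdlib Require Import Reals Lra List.
From Coquelicot Require Import Coquelicot.
Import ListNotations.
Open Scope R_scope.

Definition dx (g : R -> R -> R) : R -> R -> R := fun u v => Derive (fun t => g t v) u.
Definition dy (g : R -> R -> R) : R -> R -> R := fun u v => Derive (fun t => g u t) v.

(* iterated partial derivative along a list of directions (true = x, false = y);
   the head of the list is the last derivative applied *)
Fixpoint pd (d : list bool) (g : R -> R -> R) : R -> R -> R :=
  match d with
  | nil => g
  | true :: d' => dx (pd d' g)
  | false :: d' => dy (pd d' g)
  end.

Definition inOmega (a b u v : R) : Prop := 0 < u < a /\ 0 < v < b.

Definition C3_on (a b : R) (g : R -> R -> R) : Prop :=
  (forall d, (length d <= 2)%nat -> forall u v, inOmega a b u v ->
     ex_derive (fun t => pd d g t v) u /\ ex_derive (fun t => pd d g u t) v) /\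
  (forall d, (length d <= 3)%nat -> forall u v, inOmega a b u v ->
     continuity_2d_pt (pd d g) u v).

(* M bounds the W^{3,infty}(Omega) norm: every partial derivative of order <= 3
   is bounded by M in absolute value on Omega *)
Definition norm3_le (a b : R) (g : R -> R -> R) (M : R) : Prop :=
  forall d, (length d <= 3)%nat -> forall u v, inOmega a b u v -> Rabs (pd d g u v) <= M.

Definition is_grid (x : nat -> R) (n : nat) (a : R) : Prop :=
  x 0%nat = 0 /\ x n = a /\ forall k, (k < n)%nat -> x k < x (S k).

Definition mid (x : nat -> R) (i : nat) : R := (x i + x (S i)) / 2.
Definition hh (x : nat -> R) (i : nat) : R := x (S i) - x i.
(* h_i = (h_{i-1/2} + h_{i+1/2})/2, for i >= 1 *)
Definition hn (x : nat -> R) (i : nat) : R := (hh x (pred i) + hh x i) / 2.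
Definition hmax (x : nat -> R) (n : nat) : R :=
  fold_right Rmax 0 (map (hh x) (seq 0 n)).

Definition sigt (x y : nat -> R) (g : R -> R -> R) (i j : nat) : R :=
  g (mid x i) (mid y j)
  - (hh x i) ^ 2 / 8 * pd [true; true] g (mid x i) (mid y j)
  - (hh y j) ^ 2 / 8 * pd [false; false] g (mid x i) (mid y j).

Definition Dx_sigt (x y : nat -> R) (g : R -> R -> R) (i j : nat) : R :=
  (sigt x y g i j - sigt x y g (pred i) j) / hn x i.
Definition Dy_sigt (x y : nat -> R) (g : R -> R -> R) (i j : nat) : R :=
  (sigt x y g i j - sigt x y g i (pred j)) / hn y j.

(* Main.v *)
Require Import Defs.
From Stdlib Require Import Reals List Lra Lia.
From Coquelicot Require Import Coquelicot.
Import ListNotations.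
Open Scope R_scope.

Lemma T2 f x y : x < y -> (forall t, x <= t <= y -> forall k, (k <= 3)%nat -> ex_derive_n f k t) ->
  exists z, x < z < y /\ f y = f x + (y-x)*Derive_n f 1 x + (y-x)^2/2 * Derive_n f 2 x + (y-x)^3/6 * Derive_n f 3 z.
Proof.
  intros Hxy H. destruct (Taylor_Lagrange f 2 x y Hxy H) as [z [Hz E]].
  exists z; split; auto. rewrite E. unfold sum_f_R0.
  replace (INR (Factorial.fact 0)) with 1 by (simpl; lra).
  replace (INR (Factorial.fact 1)) with 1 by (simpl; lra).
  replace (INR (Factorial.fact 2)) with 2 by (simpl; lra).
  replace (INR (Factorial.fact 3)) with 6 by (simpl; lra).
  change (Derive_n f 0 x) with (f x). field.
Qed.

Lemma T1 f x y : x < y -> (forall t, x <= t <= y -> forall k, (k <= 3)%nat -> ex_derive_n f k t) ->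
  exists z, x < z < y /\ Derive_n f 1 y = Derive_n f 1 x + (y-x)*Derive_n f 2 x + (y-x)^2/2 * Derive_n f 3 z.
Proof.
  intros Hxy H. destruct (Taylor_Lagrange (Derive f) 1 x y Hxy) as [z [Hz E]].
  { intros t Ht k Hk. destruct k as [|[|[|k]]]; try lia; simpl; auto.
    - exact (H t Ht 2%nat ltac:(lia)).
    - exact (H t Ht 3%nat ltac:(lia)). }
  exists z; split; auto. change (Derive_n f 1 y) with (Derive f y). rewrite E. unfold sum_f_R0.
  replace (INR (Factorial.fact 0)) with 1 by (simpl; lra).
  replace (INR (Factorial.fact 1)) with 1 by (simpl; lra).
  replace (INR (Factorial.fact 2)) with 2 by (simpl; lra).
  change (Derive_n (Derive f) 0 x) with (Derive_n f 1 x).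
  change (Derive_n (Derive f) 1 x) with (Derive_n f 2 x).
  change (Derive_n (Derive f) 2 z) with (Derive_n f 3 z). field.
Qed.

Lemma T0 f x y : x < y -> (forall t, x <= t <= y -> forall k, (k <= 3)%nat -> ex_derive_n f k t) ->
  exists z, x < z < y /\ Derive_n f 2 y = Derive_n f 2 x + (y-x)* Derive_n f 3 z.
Proof.
  intros Hxy H. destruct (Taylor_Lagrange (Derive (Derive f)) 0 x y Hxy) as [z [Hz E]].
  { intros t Ht k Hk. destruct k as [|[|k]]; try lia; simpl; auto.
    - exact (H t Ht 3%nat ltac:(lia)). }
  exists z; split; auto. change (Derive_n f 2 y) with (Derive (Derive f) y). rewrite E. unfold sum_f_R0.
  replace (INR (Factorial.fact 0)) with 1 by (simpl; lra).
  replace (INR (Factorial.fact 1)) with 1 by (simpl; lra).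
  change (Derive_n (Derive (Derive f)) 0 x) with (Derive_n f 2 x).
  change (Derive_n (Derive (Derive f)) 1 z) with (Derive_n f 3 z). field.
Qed.

Lemma F0 F x y : x < y -> (forall t, x <= t <= y -> ex_derive F t) ->
  exists z, x < z < y /\ F y = F x + (y-x)* Derive F z.
Proof.
  intros Hxy H. destruct (Taylor_Lagrange F 0 x y Hxy) as [z [Hz E]].
  { intros t Ht k Hk. destruct k as [|[|k]]; try lia; simpl; auto; apply H; auto.
    }
  exists z; split; auto. rewrite E. unfold sum_f_R0.
  replace (INR (Factorial.fact 0)) with 1 by (simpl; lra).
  replace (INR (Factorial.fact 1)) with 1 by (simpl; lra).
  change (Derive_n F 0 x) with (F x). change (Derive_n F 1 z) with (Derive F z). simpl; lra.
Qed.

Lemma key (f F : R->R) p q1 q2 h1 h2 h L Lm M S1 S2 :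
 0<h1 -> 0<h2 -> h1<=h -> h2<=h -> 0<=L -> L<=Lm ->
 q1 = p - h1/2 -> q2 = p + h2/2 ->
 (forall t, q1<=t<=q2 -> (forall k, (k<=3)%nat -> ex_derive_n f k t) /\
     Rabs (Derive_n f 3 t) <= M /\ ex_derive F t /\ Rabs (Derive F t) <= M) ->
 S2 = f q2 - h2^2/8 * Derive_n f 2 q2 - L^2/8 * F q2 ->
 S1 = f q1 - h1^2/8 * Derive_n f 2 q1 - L^2/8 * F q1 ->
 Rabs (Derive_n f 1 p - (S2 - S1)/((h1+h2)/2)) <= 1*(h^2+Lm^2)*M.
Proof.
  intros h1p h2p h1h h2h L0 LL E1 E2 H ES2 ES1.
  assert (Hd : forall t, q1<=t<=q2 -> forall k, (k<=3)%nat -> ex_derive_n f k t)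
    by (intros t Ht; apply H; auto).
  assert (HM : forall t, q1<=t<=q2 -> -M <= Derive_n f 3 t <= M)
    by (intros t Ht; apply Rabs_le_between; apply H; auto).
  assert (HF : forall t, q1<=t<=q2 -> ex_derive F t) by (intros t Ht; apply H; auto).
  assert (HFM : forall t, q1<=t<=q2 -> -M <= Derive F t <= M)
    by (intros t Ht; apply Rabs_le_between; apply H; auto).
  assert (M0 : 0 <= M).
  { assert (Hp : q1 <= p <= q2) by lra. destruct (H p Hp) as [_ [Hr _]].
    pose proof (Rabs_pos (Derive_n f 3 p)). lra. }
  destruct (T2 f q1 p ltac:(lra) ltac:(intros t Ht; apply Hd; lra)) as [z3 [Hz3 A]].
  destruct (T1 f q1 p ltac:(lra) ltac:(intros t Ht; apply Hd; lra)) as [z4 [Hz4 B]].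
  destruct (T2 f p q2 ltac:(lra) ltac:(intros t Ht; apply Hd; lra)) as [z1 [Hz1 C]].
  destruct (T0 f p q2 ltac:(lra) ltac:(intros t Ht; apply Hd; lra)) as [z2 [Hz2 D]].
  destruct (F0 F q1 q2 ltac:(lra) ltac:(intros t Ht; apply HF; lra)) as [z5 [Hz5 Fe]].
  pose proof (HM z1 ltac:(lra)) as B1. pose proof (HM z2 ltac:(lra)) as B2.
  pose proof (HM z3 ltac:(lra)) as B3. pose proof (HM z4 ltac:(lra)) as B4.
  pose proof (HFM z5 ltac:(lra)) as B5.
  set (T1v := Derive_n f 3 z1) in *. set (T2v := Derive_n f 3 z2) in *.
  set (T3v := Derive_n f 3 z3) in *. set (T4v := Derive_n f 3 z4) in *.
  set (T5v := Derive F z5) in *.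
  set (d := h1/2). set (e := h2/2).
  assert (A' : f q1 = f p - d*Derive_n f 1 q1 - d^2/2*Derive_n f 2 q1 - d^3/6*T3v).
  { rewrite A. unfold d. rewrite E1. field. }
  assert (B' : Derive_n f 1 q1 = Derive_n f 1 p - d*Derive_n f 2 q1 - d^2/2*T4v).
  { rewrite B. unfold d. rewrite E1. field. }
  set (X := T1v/6 - T2v/2). set (Y := T4v/2 - T3v/6).
  assert (Id : Derive_n f 1 p - (S2 - S1)/((h1+h2)/2) = -((e^3*X - d^3*Y)/(e+d)) + L^2/8*T5v).
  { rewrite ES2, ES1, A', B', C, D, Fe. unfold X, Y, d, e. rewrite E1, E2. field. lra. }
  rewrite Id.
  assert (BX : -(2*M/3) <= X <= 2*M/3) by (unfold X; lra).
  assert (BY : -(2*M/3) <= Y <= 2*M/3) by (unfold Y; lra).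
  assert (e0 : 0 < e) by (unfold e; lra). assert (d0 : 0 < d) by (unfold d; lra).
  assert (eh : e <= h/2) by (unfold e; lra). assert (dh : d <= h/2) by (unfold d; lra).
  assert (ee : e*e <= h^2/4).
  { replace (h^2/4) with ((h/2)*(h/2)) by field. apply Rmult_le_compat; lra. }
  assert (dd : d*d <= h^2/4).
  { replace (h^2/4) with ((h/2)*(h/2)) by field. apply Rmult_le_compat; lra. }
  assert (e3 : 0 <= e^3 <= h^2/4*e).
  { split. apply pow_le; lra. replace (e^3) with ((e*e)*e) by ring. apply Rmult_le_compat_r; lra. }
  assert (d3 : 0 <= d^3 <= h^2/4*d).
  { split. apply pow_le; lra. replace (d^3) with ((d*d)*d) by ring. apply Rmult_le_compat_r; lra. }
  set (E3 := e^3) in *. set (D3 := d^3) in *.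
  assert (W1 : -(E3*(2*M/3)) <= E3*X <= E3*(2*M/3)).
  { split. replace (-(E3*(2*M/3))) with (E3*(-(2*M/3))) by ring. apply Rmult_le_compat_l; lra.
    apply Rmult_le_compat_l; lra. }
  assert (W2 : -(D3*(2*M/3)) <= D3*Y <= D3*(2*M/3)).
  { split. replace (-(D3*(2*M/3))) with (D3*(-(2*M/3))) by ring. apply Rmult_le_compat_l; lra.
    apply Rmult_le_compat_l; lra. }
  assert (W3 : (E3 + D3)*(2*M/3) <= h^2*M/6*(e+d)).
  { replace (h^2*M/6*(e+d)) with ((h^2/4*e + h^2/4*d)*(2*M/3)) by field.
    apply Rmult_le_compat_r; lra. }
  set (Q := (E3*X - D3*Y)/(e+d)).
  assert (QE : Q*(e+d) = E3*X - D3*Y) by (unfold Q; field; lra).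
  assert (BQ : -(h^2*M/6) <= Q <= h^2*M/6).
  { split; apply (Rmult_le_reg_r (e+d)); try lra; rewrite QE; lra. }
  assert (L2 : L^2 <= Lm^2) by (apply pow_incr; lra).
  assert (L20 : 0 <= L^2/8) by (assert (0 <= L^2) by (apply pow_le; lra); lra).
  assert (BT : -(L^2/8*M) <= L^2/8*T5v <= L^2/8*M).
  { split. replace (-(L^2/8*M)) with (L^2/8*(-M)) by ring. apply Rmult_le_compat_l; lra.
    apply Rmult_le_compat_l; lra. }
  assert (hM : 0 <= h^2*M) by (apply Rmult_le_pos; [apply pow2_ge_0|lra]).
  assert (LM : L^2*M <= Lm^2*M) by (apply Rmult_le_compat_r; lra).
  apply Rabs_le. split; lra.
Qed.


Lemma grid_mono x n a : is_grid x n a -> forall k m, (k <= m <= n)%nat -> x k <= x m.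
Proof.
  intros [_ [_ G]] k m. induction m; intros Hm.
  - replace k with 0%nat by lia; lra.
  - destruct (Nat.eq_dec k (S m)) as [->|Hk]; [lra|].
    specialize (IHm ltac:(lia)). specialize (G m ltac:(lia)). lra.
Qed.

Lemma grid_bounds x n a : is_grid x n a -> forall k, (k <= n)%nat -> 0 <= x k <= a.
Proof.
  intros G k Hk. pose proof (grid_mono x n a G) as M. destruct G as [G0 [Gn _]].
  split. rewrite <- G0. apply M; lia. rewrite <- Gn. apply M; lia.
Qed.

Lemma fold_max l z : In z l -> z <= fold_right Rmax 0 l.
Proof.
  induction l; simpl; [tauto|]. intros [->|Hi].
  - apply Rmax_l.
  - eapply Rle_trans; [apply IHl; auto| apply Rmax_r].
Qed.

Lemma hh_le x n i : (i < n)%nat -> hh x i <= hmax x n.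
Proof.
  intros Hi. unfold hmax. apply fold_max. apply in_map. apply in_seq. lia.
Qed.

Lemma hh_pos x n a i : is_grid x n a -> (i < n)%nat -> 0 < hh x i.
Proof. intros [_ [_ G]] Hi. unfold hh. specialize (G i Hi). lra. Qed.

Theorem lemma4p1 :
  exists C : R,
  forall (a b : R) (nx ny : nat) (x y : nat -> R),
  is_grid x nx a -> is_grid y ny b ->
  forall (s11 s22 : R -> R -> R) (M11 M22 : R),
  C3_on a b s11 -> norm3_le a b s11 M11 ->
  C3_on a b s22 -> norm3_le a b s22 M22 ->
  (forall i j, (1 <= i < nx)%nat -> (j < ny)%nat ->
     Rabs (pd [true] s11 (x i) (mid y j) - Dx_sigt x y s11 i j)
       <= C * (hmax x nx ^ 2 + hmax y ny ^ 2) * M11) /\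
  (forall i j, (i < nx)%nat -> (1 <= j < ny)%nat ->
     Rabs (pd [false] s22 (mid x i) (y j) - Dy_sigt x y s22 i j)
       <= C * (hmax x nx ^ 2 + hmax y ny ^ 2) * M22).
Proof.
  exists 1. intros a b nx ny x y Gx Gy s11 s22 M11 M22 [D11 C11] N11 [D22 C22] N22. split.
  - intros i j Hi Hj.
    pose proof (hh_pos x nx a (pred i) Gx ltac:(lia)) as h1p.
    pose proof (hh_pos x nx a i Gx ltac:(lia)) as h2p.
    pose proof (hh_pos y ny b j Gy ltac:(lia)) as Lp.
    assert (Sp : S (pred i) = i) by lia.
    assert (bx1 := grid_bounds x nx a Gx (pred i) ltac:(lia)).
    assert (bx2 := grid_bounds x nx a Gx (S i) ltac:(lia)).
    assert (by1 := grid_bounds y ny b Gy j ltac:(lia)).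
    assert (by2 := grid_bounds y ny b Gy (S j) ltac:(lia)).
    assert (Hym : 0 < mid y j < b) by (unfold mid, hh in *; lra).
    unfold Dx_sigt, hn.
    apply (key (fun t => s11 t (mid y j)) (fun t => pd [false;false] s11 t (mid y j))
             (x i) (mid x (pred i)) (mid x i) (hh x (pred i)) (hh x i) (hmax x nx)
             (hh y j) (hmax y ny) M11).
    + exact h1p.
    + exact h2p.
    + apply hh_le; lia.
    + apply hh_le; lia.
    + lra.
    + apply hh_le; lia.
    + unfold mid, hh. rewrite Sp. field.
    + unfold mid, hh. field.
    + intros t Ht.
      assert (HO : inOmega a b t (mid y j)).
      { unfold inOmega, mid, hh in *. rewrite Sp in *. lra. }
      split; [|split; [|split]].
      * intros k Hk. destruct k as [|[|[|[|k]]]]; try lia; simpl; auto.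
        -- exact (proj1 (D11 [] ltac:(simpl; lia) t (mid y j) HO)).
        -- exact (proj1 (D11 [true] ltac:(simpl; lia) t (mid y j) HO)).
        -- exact (proj1 (D11 [true;true] ltac:(simpl; lia) t (mid y j) HO)).
      * exact (N11 [true;true;true] ltac:(simpl; lia) t (mid y j) HO).
      * exact (proj1 (D11 [false;false] ltac:(simpl; lia) t (mid y j) HO)).
      * exact (N11 [true;false;false] ltac:(simpl; lia) t (mid y j) HO).
    + unfold sigt. reflexivity.
    + unfold sigt. reflexivity.
  - intros i j Hi Hj.
    pose proof (hh_pos y ny b (pred j) Gy ltac:(lia)) as h1p.
    pose proof (hh_pos y ny b j Gy ltac:(lia)) as h2p.
    pose proof (hh_pos x nx a i Gx ltac:(lia)) as Lp.
    assert (Sp : S (pred j) = j) by lia.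
    assert (bx1 := grid_bounds y ny b Gy (pred j) ltac:(lia)).
    assert (bx2 := grid_bounds y ny b Gy (S j) ltac:(lia)).
    assert (by1 := grid_bounds x nx a Gx i ltac:(lia)).
    assert (by2 := grid_bounds x nx a Gx (S i) ltac:(lia)).
    assert (Hxm : 0 < mid x i < a) by (unfold mid, hh in *; lra).
    unfold Dy_sigt, hn. rewrite (Rplus_comm (hmax x nx ^ 2)).
    apply (key (fun t => s22 (mid x i) t) (fun t => pd [true;true] s22 (mid x i) t)
             (y j) (mid y (pred j)) (mid y j) (hh y (pred j)) (hh y j) (hmax y ny)
             (hh x i) (hmax x nx) M22).
    + exact h1p.
    + exact h2p.
    + apply hh_le; lia.
    + apply hh_le; lia.
    + lra.
    + apply hh_le; lia.
    + unfold mid, hh. rewrite Sp. field.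
    + unfold mid, hh. field.
    + intros t Ht.
      assert (HO : inOmega a b (mid x i) t).
      { unfold inOmega, mid, hh in *. rewrite Sp in *. lra. }
      split; [|split; [|split]].
      * intros k Hk. destruct k as [|[|[|[|k]]]]; try lia; simpl; auto.
        -- exact (proj2 (D22 [] ltac:(simpl; lia) (mid x i) t HO)).
        -- exact (proj2 (D22 [false] ltac:(simpl; lia) (mid x i) t HO)).
        -- exact (proj2 (D22 [false;false] ltac:(simpl; lia) (mid x i) t HO)).
      * exact (N22 [false;false;false] ltac:(simpl; lia) (mid x i) t HO).
      * exact (proj2 (D22 [true;true] ltac:(simpl; lia) (mid x i) t HO)).
      * exact (N22 [false;true;true] ltac:(simpl; lia) (mid x i) t HO).
    + unfold sigt. change (Derive_n (fun t : R => s22 (mid x i) t) 2 (mid y j)) with (pd [false;false] s22 (mid x i) (mid y j)). ring.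
    + unfold sigt. change (Derive_n (fun t : R => s22 (mid x i) t) 2 (mid y (pred j))) with (pd [false;false] s22 (mid x i) (mid y (pred j))). ring.
Qed.
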